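(* Let $\eta>0$, $\theta>0$ with $(\eta,\theta)\in\mathcal{R}$, and let $\delta_*=\frac{u_m^2}{u_m^2+\eta}$ be the value of $\delta$ for which the interior equilibrium passes through the fold point $P=(u_m,v_m)$. Assume $f(u_m,v_m)=0,\ g(u_m,v_m,\delta_* )=0,\ \frac{\partial f}{\partial u}(u_m,v_m)=0$, and $\frac{\partial f}{\partial v}(u_m,v_m)\neq0,\ \frac{\partial^2 f}{\partial u^2}(u_m,v_m)\neq0,\ \frac{\partial g}{\partial u}(u_m,v_m,\delta_* )\neq0,\ \frac{\partial g}{\partial \delta}(u_m,v_m,\delta_* )\neq0.$ Then there exist $\epsilon_0>0$ and $\delta_0>0$ such that for $0<\epsilon<\epsilon_0$ and $|\delta-\delta_*|<\delta_0$ the system $$\frac{du}{dt}=f(u,v),\qquad \frac{dv}{dt}=\epsilon\, g(u,v,\delta)$$ has an equilibrium $P_2$ in a neighbourhood of $P$ which converges to $P$ as $(\epsilon,\delta)\to(0,\delta_* )$. The system undergoes a singular Hopf bifurcation at $$\delta_H(\sqrt{\epsilon})=\delta_*+\mathcal{O}(\epsilon^{5/2}).$$ This Hopf bifurcation is non-degenerate when $A\neq0$; it is supercritical if $A<0$ and subcritical if $A>0$, where $$A=a_{01}a_{20}b_{20}-a_{01}a_{30}b_{10}+a_{11}a_{20}b_{10}.$$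
   Context: The system is $f(u,v)=u(1-u)(u+\theta)(u^2+\eta)-u^2v$ and $g(u,v,\delta)=u^2v-\delta v(u^2+\eta)$, with parameters $\delta,\theta,\eta>0$ and $0<\epsilon\ll1$. It is considered on the first quadrant. Let $\phi(u)=\frac{1}{u}(1-u)(u+\theta)(u^2+\eta)$ for $u>0$. The critical manifold is $M_{20}=\{(u,v):u>0,\ v=\phi(u)\}$. Let $\Gamma=9\theta^2+6\theta+9-24\eta$ and $\Lambda_1=\frac{\eta}{8}\big(\theta^2+\frac{22}{3}\theta+1\big)-\frac{1}{96}\big(3(1+\theta^4)+2(\theta^2+4\eta^2)\big)$, $\Lambda_2=\frac{1-\theta}{288}(3\theta^2+2\theta+3-8\eta)$. Define - $\mathcal{R}_1=\{(\eta,\theta):0<\eta<\theta\le1,\ \frac{\sqrt\Gamma}{3}-3<\theta<1+\frac{\sqrt\Gamma}{3},\ \Gamma>(\Lambda_1/\Lambda_2)^2\}$, - $\mathcal{R}_2=\{(\eta,\theta):0<\eta<1<\theta,\ \frac{\sqrt\Gamma}{3}-3<\theta<1+\frac{\sqrt\Gamma}{3},\ \Gamma<(\Lambda_1/\Lambda_2)^2\}$, - $\mathcal{R}_3=\{(\eta,\theta):0<\theta<1<\eta,\ \frac{\sqrt\Gamma}{3}-3<\theta<1,\ \Gamma>(\Lambda_1/\Lambda_2)^2\}$, and $\mathcal{R}=\mathcal{R}_1\cup\mathcal{R}_2\cup\mathcal{R}_3$. For $(\eta,\theta)\in\mathcal{R}$, $M_{20}$ is S-shaped with exactly two fold points. These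 are $P=(u_m,v_m)$, a local minimum of $\phi$, and $Q=(u_M,v_M)$, a local maximum of $\phi$, with $0<u_m<u_M<1$, $v_m=\phi(u_m)$ and $v_M=\phi(u_M)$. The interior equilibrium is $E_*=(u_*,v_* )$ with $u_*=\sqrt{\delta\eta/(1-\delta)}$ and $v_*=\phi(u_* )$. Notation: $a_{ij}=\frac{\partial^{i+j}f}{\partial u^i\partial v^j}(u_m,v_m)$ and $b_{ij}=\frac{\partial^{i+j}g}{\partial u^i\partial v^j}(u_m,v_m,\delta_* )$. A singular Hopf bifurcation is a Hopf bifurcation of an equilibrium near a fold point of the critical manifold at which the eigenvalues of the Jacobian become singular in the limit $\epsilon\to0$. *)

(* Defs.v *)
From Stdlib Require Import Reals Lra.
From Coquelicot Require Import Coquelicot.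
Open Scope R_scope.

Definition f_sys (theta eta u v : R) : R :=
  u * (1 - u) * (u + theta) * (u ^ 2 + eta) - u ^ 2 * v.
Definition g_sys (eta u v delta : R) : R :=
  u ^ 2 * v - delta * v * (u ^ 2 + eta).
Definition phi (theta eta u : R) : R :=
  / u * (1 - u) * (u + theta) * (u ^ 2 + eta).

Definition Gam (eta theta : R) : R := 9 * theta ^ 2 + 6 * theta + 9 - 24 * eta.
Definition Lam1 (eta theta : R) : R :=
  eta / 8 * (theta ^ 2 + 22 / 3 * theta + 1)
  - / 96 * (3 * (1 + theta ^ 4) + 2 * (theta ^ 2 + 4 * eta ^ 2)).
Definition Lam2 (eta theta : R) : R :=
  (1 - theta) / 288 * (3 * theta ^ 2 + 2 * theta + 3 - 8 * eta).

Definition region1 (eta theta : R) : Prop :=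
  0 < eta /\ eta < theta /\ theta <= 1 /\
  sqrt (Gam eta theta) / 3 - 3 < theta /\ theta < 1 + sqrt (Gam eta theta) / 3 /\
  Gam eta theta > (Lam1 eta theta / Lam2 eta theta) ^ 2.
Definition region2 (eta theta : R) : Prop :=
  0 < eta /\ eta < 1 /\ 1 < theta /\
  sqrt (Gam eta theta) / 3 - 3 < theta /\ theta < 1 + sqrt (Gam eta theta) / 3 /\
  Gam eta theta < (Lam1 eta theta / Lam2 eta theta) ^ 2.
Definition region3 (eta theta : R) : Prop :=
  0 < theta /\ theta < 1 /\ 1 < eta /\
  sqrt (Gam eta theta) / 3 - 3 < theta /\ theta < 1 /\
  Gam eta theta > (Lam1 eta theta / Lam2 eta theta) ^ 2.
Definition region (eta theta : R) : Prop :=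
  region1 eta theta \/ region2 eta theta \/ region3 eta theta.

Definition is_local_min_phi (theta eta u0 : R) : Prop :=
  0 < u0 /\ exists r, 0 < r /\
    forall u, 0 < u -> Rabs (u - u0) < r -> phi theta eta u0 <= phi theta eta u.

Definition dU (F : R -> R -> R) : R -> R -> R := fun x y => Derive (fun t => F t y) x.
Definition dV (F : R -> R -> R) : R -> R -> R := fun x y => Derive (fun t => F x t) y.

(** First Lyapunov coefficient of the planar field (F1,F2) at an equilibrium
   (x0,y0) whose Jacobian J has trace 0 and positive determinant w^2.
   Coordinates are changed by (x,y) = (x0,y0) + T z with
   T = [[1, p/w],[0, r/w]] (p = J11, r = J21), so that T^{-1} J T = [[0,-w],[w,0]];
   then the Guckenheimer--Holmes formula (3.4.11) is applied. *)
Definition lyap1 (F1 F2 : R -> R -> R) (x0 y0 : R) : R :=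
  let p := dU F1 x0 y0 in
  let r := dU F2 x0 y0 in
  let w := sqrt (dU F1 x0 y0 * dV F2 x0 y0 - dV F1 x0 y0 * dU F2 x0 y0) in
  let X := fun x y => x0 + x + p / w * y in
  let Y := fun x y => y0 + r / w * y in
  let W1 := fun x y => F1 (X x y) (Y x y) - p / r * F2 (X x y) (Y x y) in
  let W2 := fun x y => w / r * F2 (X x y) (Y x y) in
  let fxx := dU (dU W1) 0 0 in
  let fxy := dU (dV W1) 0 0 in
  let fyy := dV (dV W1) 0 0 in
  let gxx := dU (dU W2) 0 0 in
  let gxy := dU (dV W2) 0 0 in
  let gyy := dV (dV W2) 0 0 in
  let fxxx := dU (dU (dU W1)) 0 0 in
  let fxyy := dU (dV (dV W1)) 0 0 in
  let gxxy := dU (dU (dV W2)) 0 0 in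
  let gyyy := dV (dV (dV W2)) 0 0 in
  / 16 * (fxxx + fxyy + gxxy + gyyy)
  + / (16 * w) * (fxy * (fxx + fyy) - gxy * (gxx + gyy) - fxx * gxx + fyy * gyy).

(** Hopf bifurcation of the one-parameter family of planar fields
   (G1 mu, G2 mu) along the equilibrium branch e, at mu = mu0, with
   eigenvalues +- i w at mu0:  e mu is an equilibrium for mu near mu0;
   at mu0 the Jacobian has trace 0 and determinant w^2 with w > 0;
   and the real part of the eigenvalues (trace/2) crosses 0 with nonzero speed. *)
Definition hopf_bif (G1 G2 : R -> R -> R -> R) (e : R -> R * R) (mu0 w : R) : Prop :=
  (exists r, 0 < r /\ forall mu, Rabs (mu - mu0) < r ->
      G1 mu (fst (e mu)) (snd (e mu)) = 0 /\ G2 mu (fst (e mu)) (snd (e mu)) = 0) /\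
  dU (G1 mu0) (fst (e mu0)) (snd (e mu0)) + dV (G2 mu0) (fst (e mu0)) (snd (e mu0)) = 0 /\
  0 < w /\
  dU (G1 mu0) (fst (e mu0)) (snd (e mu0)) * dV (G2 mu0) (fst (e mu0)) (snd (e mu0))
   - dV (G1 mu0) (fst (e mu0)) (snd (e mu0)) * dU (G2 mu0) (fst (e mu0)) (snd (e mu0))
   = w ^ 2 /\
  exists d, d <> 0 /\
    is_derive (fun mu => dU (G1 mu) (fst (e mu)) (snd (e mu))
                         + dV (G2 mu) (fst (e mu)) (snd (e mu))) mu0 d.

(* Main.v *)
Require Import Defs.
From Stdlib Require Import Reals Lra Psatz.
From Coquelicot Require Import Coquelicot.
Open Scope R_scope.

Lemma dU_of (W D1 D2 : R -> R -> R) :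
  (forall x y, W x y = D1 x y) ->
  (forall x y, is_derive (fun t => D1 t y) x (D2 x y)) ->
  forall x y, dU W x y = D2 x y.
Proof.
  intros H1 H2 x y. unfold dU.
  rewrite (Derive_ext _ (fun t => D1 t y)) by (intro; apply H1).
  apply is_derive_unique, H2.
Qed.
Lemma dV_of (W D1 D2 : R -> R -> R) :
  (forall x y, W x y = D1 x y) ->
  (forall x y, is_derive (fun t => D1 x t) y (D2 x y)) ->
  forall x y, dV W x y = D2 x y.
Proof.
  intros H1 H2 x y. unfold dV.
  rewrite (Derive_ext _ (fun t => D1 x t)) by (intro; apply H1).
  apply is_derive_unique, H2.
Qed.

Definition Q1 th et u := -5*u^4 + 4*(1-th)*u^3 + 3*(th-et)*u^2 + 2*(1-th)*et*u + th*et.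
Definition Q2 th et u := -20*u^3 + 12*(1-th)*u^2 + 6*(th-et)*u + 2*(1-th)*et.
Definition Q3 th et u := -60*u^2 + 24*(1-th)*u + 6*(th-et).

Definition WW1 th et x0 y0 k := fun x y => f_sys th et (x0 + x) (y0 + k*y).
Definition WW2 et x0 y0 k c d := fun x y => c * g_sys et (x0 + x) (y0 + k*y) d.

Ltac dtac := intros; unfold WW1, WW2, f_sys, g_sys, Q1, Q2, Q3; auto_derive; [auto| ring].


Lemma W1_u th et x0 y0 k : forall x y, dU (WW1 th et x0 y0 k) x y = Q1 th et (x0+x) - 2*(x0+x)*(y0+k*y).
Proof. apply (dU_of _ (WW1 th et x0 y0 k)); [reflexivity|dtac]. Qed.
Lemma W1_uu th et x0 y0 k : forall x y, dU (dU (WW1 th et x0 y0 k)) x y = Q2 th et (x0+x) - 2*(y0+k*y).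
Proof. apply (dU_of _ _ _ (W1_u th et x0 y0 k)); dtac. Qed.
Lemma W1_uuu th et x0 y0 k : forall x y, dU (dU (dU (WW1 th et x0 y0 k))) x y = Q3 th et (x0+x).
Proof. apply (dU_of _ _ _ (W1_uu th et x0 y0 k)); dtac. Qed.
Lemma W1_v th et x0 y0 k : forall x y, dV (WW1 th et x0 y0 k) x y = -(x0+x)^2*k.
Proof. apply (dV_of _ (WW1 th et x0 y0 k)); [reflexivity|dtac]. Qed.
Lemma W1_vv th et x0 y0 k : forall x y, dV (dV (WW1 th et x0 y0 k)) x y = 0.
Proof. apply (dV_of _ _ _ (W1_v th et x0 y0 k)); dtac. Qed.
Lemma W1_uv th et x0 y0 k : forall x y, dU (dV (WW1 th et x0 y0 k)) x y = -2*(x0+x)*k.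
Proof. apply (dU_of _ _ _ (W1_v th et x0 y0 k)); dtac. Qed.
Lemma W1_uvv th et x0 y0 k : forall x y, dU (dV (dV (WW1 th et x0 y0 k))) x y = 0.
Proof. apply (dU_of _ _ _ (W1_vv th et x0 y0 k)); dtac. Qed.

Lemma W2_u et x0 y0 k c d : forall x y, dU (WW2 et x0 y0 k c d) x y = c*(2*(x0+x)*(y0+k*y)*(1-d)).
Proof. apply (dU_of _ (WW2 et x0 y0 k c d)); [reflexivity|dtac]. Qed.
Lemma W2_uu et x0 y0 k c d : forall x y, dU (dU (WW2 et x0 y0 k c d)) x y = c*(2*(y0+k*y)*(1-d)).
Proof. apply (dU_of _ _ _ (W2_u et x0 y0 k c d)); dtac. Qed.
Lemma W2_v et x0 y0 k c d : forall x y, dV (WW2 et x0 y0 k c d) x y = c*k*((x0+x)^2*(1-d) - d*et).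
Proof. apply (dV_of _ (WW2 et x0 y0 k c d)); [reflexivity|dtac]. Qed.
Lemma W2_vv et x0 y0 k c d : forall x y, dV (dV (WW2 et x0 y0 k c d)) x y = 0.
Proof. apply (dV_of _ _ _ (W2_v et x0 y0 k c d)); dtac. Qed.
Lemma W2_vvv et x0 y0 k c d : forall x y, dV (dV (dV (WW2 et x0 y0 k c d))) x y = 0.
Proof. apply (dV_of _ _ _ (W2_vv et x0 y0 k c d)); dtac. Qed.
Lemma W2_uv et x0 y0 k c d : forall x y, dU (dV (WW2 et x0 y0 k c d)) x y = c*k*(2*(x0+x)*(1-d)).
Proof. apply (dU_of _ _ _ (W2_v et x0 y0 k c d)); dtac. Qed.
Lemma W2_uuv et x0 y0 k c d : forall x y, dU (dU (dV (WW2 et x0 y0 k c d))) x y = c*k*(2*(1-d)).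
Proof. apply (dU_of _ _ _ (W2_uv et x0 y0 k c d)); dtac. Qed.


Lemma F_u th et : forall x y, dU (f_sys th et) x y = Q1 th et x - 2*x*y.
Proof. apply (dU_of _ (f_sys th et)); [reflexivity|dtac]. Qed.
Lemma F_uu th et : forall x y, dU (dU (f_sys th et)) x y = Q2 th et x - 2*y.
Proof. apply (dU_of _ _ _ (F_u th et)); dtac. Qed.
Lemma F_uuu th et : forall x y, dU (dU (dU (f_sys th et))) x y = Q3 th et x.
Proof. apply (dU_of _ _ _ (F_uu th et)); dtac. Qed.
Lemma F_v th et : forall x y, dV (f_sys th et) x y = -x^2.
Proof. apply (dV_of _ (f_sys th et)); [reflexivity|dtac]. Qed.
Lemma F_uv th et : forall x y, dU (dV (f_sys th et)) x y = -2*x.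
Proof. apply (dU_of _ _ _ (F_v th et)); dtac. Qed.
Lemma G_u et d : forall x y, dU (fun u v => g_sys et u v d) x y = 2*x*y*(1-d).
Proof. apply (dU_of _ (fun u v => g_sys et u v d)); [reflexivity|dtac]. Qed.
Lemma G_uu et d : forall x y, dU (dU (fun u v => g_sys et u v d)) x y = 2*y*(1-d).
Proof. apply (dU_of _ _ _ (G_u et d)); dtac. Qed.
Lemma Ge_u et e d : forall x y, dU (fun u v => e * g_sys et u v d) x y = e*(2*x*y*(1-d)).
Proof. apply (dU_of _ (fun u v => e * g_sys et u v d)); [reflexivity|dtac]. Qed.
Lemma Ge_v et e d : forall x y, dV (fun u v => e * g_sys et u v d) x y = e*(x^2*(1-d) - d*et).
Proof. apply (dV_of _ (fun u v => e * g_sys et u v d)); [reflexivity|dtac]. Qed.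

Lemma cont_eps (f : R -> R) x : ex_derive f x -> forall r, 0 < r ->
  exists s, 0 < s /\ forall y, Rabs (y - x) < s -> Rabs (f y - f x) < r.
Proof.
  intros H r Hr. pose proof (ex_derive_continuous f x H) as Hc.
  apply filterlim_locally with (eps := mkposreal r Hr) in Hc.
  destruct Hc as [d Hd]. exists d. split; [apply cond_pos|].
  intros y Hy. apply Hd. exact Hy.
Qed.
From Stdlib Require Import FunctionalExtensionality.
Lemma lyap_W1 th et x0 y0 w r e d :
  (fun x y => f_sys th et (x0 + x + 0 / w * y) (y0 + r / w * y) - 0 / r * (e * g_sys et (x0 + x + 0 / w * y) (y0 + r / w * y) d))
  = WW1 th et x0 y0 (r / w).
Proof. apply functional_extensionality; intro x; apply functional_extensionality; intro y.
  unfold WW1, f_sys, g_sys. unfold Rdiv. ring. Qed.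
Lemma lyap_W2 et x0 y0 w r e d :
  (fun x y => w / r * (e * g_sys et (x0 + x + 0 / w * y) (y0 + r / w * y) d))
  = WW2 et x0 y0 (r / w) (w / r * e) d.
Proof. apply functional_extensionality; intro x; apply functional_extensionality; intro y.
  unfold WW2, f_sys, g_sys. unfold Rdiv. ring. Qed.

Lemma lyap_val th et um vm d e : 0 < um -> 0 < vm -> d < 1 -> 0 < e ->
  Q1 th et um - 2 * um * vm = 0 ->
  lyap1 (f_sys th et) (fun u v => e * g_sys et u v d) um vm
  = (um * Q3 th et um - 3 * (Q2 th et um - 2 * vm)) / (16 * um).
Proof.
  intros Hum Hvm Hd He H1.
  unfold lyap1. cbv beta zeta.
  rewrite !F_u, H1, !F_v, !Ge_u, !Ge_v.
  set (r := e * (2 * um * vm * (1 - d))).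
  set (w := sqrt (0 * (e * (um ^ 2 * (1 - d) - d * et)) - - um ^ 2 * r)).
  rewrite lyap_W1, lyap_W2.
  rewrite !W1_uu, !W1_uuu, !W1_uv, !W1_vv, !W1_uvv, !W2_uu, !W2_uv, !W2_vv, !W2_uuv, !W2_vvv.
  assert (Hr : 0 < r) by (unfold r; apply Rmult_lt_0_compat; [lra|]; apply Rmult_lt_0_compat; [|lra]; apply Rmult_lt_0_compat; lra).
  assert (Hw2 : w ^ 2 = um ^ 2 * r).
  { unfold w. rewrite pow2_sqrt. ring. pose proof (pow_lt um 2 Hum). nra. }
  assert (Hw : 0 < w) by (unfold w; apply sqrt_lt_R0; pose proof (pow_lt um 2 Hum); nra).
  assert (He' : e = r / (2 * um * vm * (1 - d))) by (unfold r; field; split; lra).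
  clearbody w r. rewrite He'.
  assert (Hr' : r = w ^ 2 / um ^ 2) by (rewrite Hw2; field; lra).
  rewrite Hr'. rewrite !Rplus_0_r.
  field. repeat split; lra.
Qed.
Theorem theorem1 (eta theta um : R) :
  0 < eta -> 0 < theta -> region eta theta ->
  is_local_min_phi theta eta um ->
  let vm := phi theta eta um in
  let dstar := um ^ 2 / (um ^ 2 + eta) in
  let F := f_sys theta eta in
  let Gd := fun u v => g_sys eta u v dstar in
  F um vm = 0 -> Gd um vm = 0 -> dU F um vm = 0 ->
  dV F um vm <> 0 -> dU (dU F) um vm <> 0 -> dU Gd um vm <> 0 ->
  Derive (fun d => g_sys eta um vm d) dstar <> 0 ->
  let a01 := dV F um vm in
  let a20 := dU (dU F) um vm in
  let a11 := dU (dV F) um vm in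
  let a30 := dU (dU (dU F)) um vm in
  let b10 := dU Gd um vm in
  let b20 := dU (dU Gd) um vm in
  let A := a01 * a20 * b20 - a01 * a30 * b10 + a11 * a20 * b10 in
  exists (eps0 delta0 C : R) (P2 : R -> R -> R * R) (dH om : R -> R),
    0 < eps0 /\ 0 < delta0 /\
    (* P2 eps delta is an equilibrium of u' = f, v' = eps g *)
    (forall eps delta, 0 < eps < eps0 -> Rabs (delta - dstar) < delta0 ->
       F (fst (P2 eps delta)) (snd (P2 eps delta)) = 0 /\
       eps * g_sys eta (fst (P2 eps delta)) (snd (P2 eps delta)) delta = 0) /\
    (* P2 -> P as (eps, delta) -> (0, dstar) *)
    (forall r, 0 < r -> exists s, 0 < s /\
       forall eps delta, 0 < eps < Rmin s eps0 -> Rabs (delta - dstar) < Rmin s delta0 ->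
         Rabs (fst (P2 eps delta) - um) < r /\ Rabs (snd (P2 eps delta) - vm) < r) /\
    (* singular Hopf bifurcation at dH eps = dstar + O(eps^(5/2)) *)
    (forall eps, 0 < eps < eps0 ->
       Rabs (dH eps - dstar) < delta0 /\
       Rabs (dH eps - dstar) <= C * Rpower eps (5 / 2) /\
       hopf_bif (fun _ => F) (fun d u v => eps * g_sys eta u v d) (P2 eps) (dH eps) (om eps) /\
       (A < 0 -> lyap1 F (fun u v => eps * g_sys eta u v (dH eps))
                   (fst (P2 eps (dH eps))) (snd (P2 eps (dH eps))) < 0) /\
       (A > 0 -> lyap1 F (fun u v => eps * g_sys eta u v (dH eps))
                   (fst (P2 eps (dH eps))) (snd (P2 eps (dH eps))) > 0)) /\
    (* singularity: the Hopf frequency tends to 0 as eps -> 0 *)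
    (forall r, 0 < r -> exists s, 0 < s /\ forall eps, 0 < eps < Rmin s eps0 -> Rabs (om eps) < r).
Proof.
  intros Heta Hth _ [Hum _] vm dstar F Gd _ _ HdF _ HFuu _ _ a01 a20 a11 a30 b10 b20 A.
  assert (Hvm : vm = (1 - um) * (um + theta) * (um ^ 2 + eta) / um).
  { unfold vm, phi. field. lra. }
  assert (HdF' : Q1 theta eta um - 2 * um * vm = 0).
  { rewrite <- HdF. unfold F. rewrite F_u. reflexivity. }
  assert (Hum1 : um < 1).
  { destruct (Rlt_or_le um 1) as [h|h]; [exact h|exfalso].
    assert (E : Q1 theta eta um - 2 * (1 - um) * (um + theta) * (um ^ 2 + eta) = 0).
    { rewrite <- HdF'. rewrite Hvm. field. lra. }
    unfold Q1 in E.
    assert (0 < um^3*(3*um-2) + theta*um^2*(2*um-1) + eta*um^2 + theta*eta).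
    { assert (0 < um^3*(3*um-2)) by (apply Rmult_lt_0_compat; [apply pow_lt|]; lra).
      assert (0 <= theta*um^2*(2*um-1)).
      { apply Rmult_le_pos; [|lra]. apply Rmult_le_pos; [lra| apply pow_le; lra]. }
      assert (0 < eta*um^2) by (apply Rmult_lt_0_compat; [lra|apply pow_lt; lra]).
      assert (0 < theta*eta) by (apply Rmult_lt_0_compat; lra).
      lra. }
    nra. }
  assert (Hvmpos : 0 < vm).
  { rewrite Hvm. apply Rdiv_lt_0_compat; [|lra].
    apply Rmult_lt_0_compat; [apply Rmult_lt_0_compat; lra|].
    pose proof (pow2_ge_0 um); lra. }
  assert (Hum2 : 0 < um ^ 2) by (apply pow_lt; lra).
  assert (Hd0 : 0 < dstar) by (unfold dstar; apply Rdiv_lt_0_compat; lra).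
  assert (Hd1 : 1 - dstar = eta / (um ^ 2 + eta)) by (unfold dstar; field; lra).
  assert (Hd1' : 0 < 1 - dstar) by (rewrite Hd1; apply Rdiv_lt_0_compat; lra).
  assert (Hs : sqrt (dstar * eta / (1 - dstar)) = um).
  { replace (dstar * eta / (1 - dstar)) with (um ^ 2).
    - apply sqrt_pow2; lra.
    - unfold dstar. field. lra. }
  set (sq := fun d => sqrt (d * eta / (1 - d))).
  assert (Hsd : forall d, 0 < d < 1 -> 0 < sq d /\ sq d ^ 2 = d * eta / (1 - d)).
  { intros d Hd. assert (0 < d * eta / (1 - d)) by (apply Rdiv_lt_0_compat; [apply Rmult_lt_0_compat|]; lra).
    split; [apply sqrt_lt_R0; auto | apply pow2_sqrt; lra]. }
  assert (Heq : forall d, 0 < d < 1 -> F (sq d) (phi theta eta (sq d)) = 0 /\ g_sys eta (sq d) (phi theta eta (sq d)) d = 0).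
  { intros d Hd. destruct (Hsd d Hd) as [h1 h2]. unfold F, f_sys, g_sys, phi. split.
    - field. lra.
    - replace (sq d ^ 2 * (/ sq d * (1 - sq d) * (sq d + theta) * (sq d ^ 2 + eta)) -
          d * (/ sq d * (1 - sq d) * (sq d + theta) * (sq d ^ 2 + eta)) * (sq d ^ 2 + eta))
      with ((/ sq d * (1 - sq d) * (sq d + theta) * (sq d ^ 2 + eta)) * (sq d ^ 2 * (1 - d) - d * eta)) by ring.
      rewrite h2. field. lra. }
  set (delta0 := Rmin dstar (1 - dstar) / 2).
  assert (Hdel0 : 0 < delta0) by (unfold delta0; apply Rmin_case; lra).
  assert (Hnear : forall d, Rabs (d - dstar) < delta0 -> 0 < d < 1).
  { intros d Hd. unfold delta0 in Hd. pose proof (Rmin_l dstar (1 - dstar)). pose proof (Rmin_r dstar (1 - dstar)).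
    apply Rabs_def2 in Hd. lra. }
  assert (Hsdstar : sq dstar = um) by exact Hs.
  exists 1, delta0, 0, (fun _ d => (sq d, phi theta eta (sq d))), (fun _ => dstar),
    (fun e => sqrt (um ^ 2 * (e * (2 * um * vm * (1 - dstar))))).
  split; [lra|]. split; [exact Hdel0|].
  split.
  { intros e d He Hd. cbn [fst snd]. destruct (Heq d (Hnear d Hd)) as [h1 h2]. rewrite h2. split; [exact h1|ring]. }
  split.
  { intros r Hr.
    assert (Hsq0 : 0 < dstar * eta / (1 - dstar)) by (apply Rdiv_lt_0_compat; [apply Rmult_lt_0_compat|]; lra).
    assert (Hs' := Hs). assert (Hsq0' := Hsq0). unfold Rdiv, Rminus in Hs', Hsq0'.
    assert (E1 : ex_derive sq dstar).
    { unfold sq. auto_derive. repeat split; auto; lra. }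
    assert (E2 : ex_derive (fun d => phi theta eta (sq d)) dstar).
    { unfold sq, phi. auto_derive. rewrite Hs'. repeat split; auto; lra. }
    destruct (cont_eps _ _ E1 r Hr) as [s1 [Hs1 H1]].
    destruct (cont_eps _ _ E2 r Hr) as [s2 [Hs2 H2]].
    exists (Rmin s1 s2). split; [apply Rmin_case; lra|].
    intros e d He Hd. cbn [fst snd].
    assert (Hd' : Rabs (d - dstar) < Rmin s1 s2).
    { eapply Rlt_le_trans; [exact Hd| apply Rmin_l]. }
    split.
    - rewrite <- Hsdstar. apply H1. eapply Rlt_le_trans; [exact Hd'|apply Rmin_l].
    - unfold vm. rewrite <- Hsdstar. apply H2. eapply Rlt_le_trans; [exact Hd'|apply Rmin_r]. }
  split.
  { intros e He. cbv beta. cbn [fst snd]. rewrite Hsdstar. change (phi theta eta um) with vm.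
    replace (dstar - dstar) with 0 by ring. rewrite Rabs_R0.
    split; [exact Hdel0|]. split; [rewrite Rmult_0_l; lra|].
    assert (Ha20 : Q2 theta eta um - 2 * vm <> 0).
    { intro h. apply HFuu. unfold F. rewrite F_uu. exact h. }
    split.
    { unfold hopf_bif. cbv beta. cbn [fst snd]. rewrite Hsdstar. change (phi theta eta um) with vm.
      unfold F. rewrite !F_u, HdF', !F_v, !Ge_v, !Ge_u.
      assert (Hg0 : um ^ 2 * (1 - dstar) - dstar * eta = 0) by (unfold dstar; field; lra).
      assert (HK : 0 < um ^ 2 * (e * (2 * um * vm * (1 - dstar)))).
      { apply Rmult_lt_0_compat; [lra|]. apply Rmult_lt_0_compat; [lra|]. apply Rmult_lt_0_compat; [|lra]. apply Rmult_lt_0_compat; lra. }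
      split.
      { exists delta0. split; [exact Hdel0|]. intros mu Hmu. destruct (Heq mu (Hnear mu Hmu)) as [h1 h2].
        rewrite h2. split; [exact h1|ring]. }
      split.
      { rewrite Hg0. ring. }
      split.
      { apply sqrt_lt_R0. exact HK. }
      split.
      { rewrite pow2_sqrt by lra. ring. }
      set (sp := eta / (1 - dstar) ^ 2 / (2 * um)).
      assert (Hsp : 0 < sp).
      { unfold sp. apply Rdiv_lt_0_compat; [apply Rdiv_lt_0_compat; [lra|apply pow_lt; lra]|lra]. }
      exists ((Q2 theta eta um - 2 * vm) * sp). split.
      { apply Rmult_integral_contrapositive_currified; lra. }
      apply is_derive_ext with (f := fun mu => Q1 theta eta (sq mu) - 2 * sq mu * phi theta eta (sq mu)
                                   + e * (sq mu ^ 2 * (1 - mu) - mu * eta)).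
      { intro t. rewrite F_u, Ge_v. reflexivity. }
      pose proof Hs as Hs'. unfold Rdiv, Rminus in Hs'.
      assert (Hsq0' : 0 < dstar * eta * / (1 + - dstar)) by (apply Rmult_lt_0_compat; [apply Rmult_lt_0_compat; lra| apply Rinv_0_lt_compat; lra]).
      unfold sq, phi, Q1. auto_derive.
      { rewrite Hs'. repeat split; auto; lra. }
      rewrite Hs'.
      rewrite <- (Rplus_0_r ((Q2 theta eta um - 2 * vm) * sp)).
      rewrite <- (Rmult_0_r (-2 * sp / um)).
      rewrite <- HdF'.
      unfold sp, Q1, Q2. rewrite Hvm. unfold dstar.
      field. repeat split; lra. }
    unfold F. rewrite lyap_val by (auto; lra).
    assert (HA : A = 2 * vm * (1 - dstar) * um ^ 2 * (um * Q3 theta eta um - 3 * (Q2 theta eta um - 2 * vm))).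
    { unfold A, a01, a20, a11, a30, b10, b20, Gd, F. rewrite F_v, F_uu, F_uv, F_uuu, G_u, G_uu. ring. }
    assert (Hc : 0 < 2 * vm * (1 - dstar) * um ^ 2).
    { apply Rmult_lt_0_compat; [|lra]. apply Rmult_lt_0_compat; lra. }
    set (X := um * Q3 theta eta um - 3 * (Q2 theta eta um - 2 * vm)) in *.
    split; intro hA; rewrite HA in hA.
    - apply Rdiv_neg_pos; [|lra]. destruct (Rlt_or_le X 0); [auto|]. nra.
    - apply Rdiv_lt_0_compat; [|lra]. destruct (Rlt_or_le 0 X); [auto|]. nra. }
  { intros r Hr.
    assert (HK : 0 < um ^ 2 * (2 * um * vm * (1 - dstar))).
    { apply Rmult_lt_0_compat; [lra|]. apply Rmult_lt_0_compat; [|lra]. apply Rmult_lt_0_compat; lra. }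
    exists (r ^ 2 / (um ^ 2 * (2 * um * vm * (1 - dstar)))). split.
    { apply Rdiv_lt_0_compat; [apply pow_lt|]; lra. }
    intros e He.
    assert (He1 : e < r ^ 2 / (um ^ 2 * (2 * um * vm * (1 - dstar)))) by (eapply Rlt_le_trans; [apply He|apply Rmin_l]).
    assert (Hx : um ^ 2 * (e * (2 * um * vm * (1 - dstar))) < r ^ 2).
    { apply Rmult_lt_compat_r with (r := um ^ 2 * (2 * um * vm * (1 - dstar))) in He1; [|exact HK].
      replace (r ^ 2 / (um ^ 2 * (2 * um * vm * (1 - dstar))) * (um ^ 2 * (2 * um * vm * (1 - dstar)))) with (r ^ 2) in He1 by (field; lra).
      lra. }
    assert (Hx0 : 0 <= um ^ 2 * (e * (2 * um * vm * (1 - dstar)))).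
    { apply Rlt_le. replace (um ^ 2 * (e * (2 * um * vm * (1 - dstar)))) with (e * (um ^ 2 * (2 * um * vm * (1 - dstar)))) by ring.
      apply Rmult_lt_0_compat; lra. }
    rewrite Rabs_pos_eq by apply sqrt_pos.
    rewrite <- (sqrt_pow2 r) by lra. apply sqrt_lt_1_alt. lra. }
Qed.
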